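(* Let $I=(G,T,k)$, $G=(V,E)$, be a Node Multiway Cut instance satisfying (R1) no two terminals are adjacent and $p(I)\ge 0$; (R2) no vertex of $V\setminus T$ is adjacent to two distinct terminals; (R3) for every terminal $t$ and every neighbour $w\in V\setminus T$ of $t$, the optimum of the LP-relaxation of $I$ with the additional constraint $d_w=0$ is strictly larger than $LP(I)$. Let $t\in T$ and let $w\in V\setminus T$ be a neighbour of $t$. Let $I_1=(G-w,T,k-1)$ and $I_2=(G/tw,T,k)$. Then $LP(I_1)\ge LP(I)-1/2$ and $LP(I_2)\ge LP(I)+1/2$; consequently $p(I_1)\le p(I)-1/2$ and $p(I_2)\le p(I)-1/2$. Moreover, $I$ is a YES-instance iff $I_1$ or $I_2$ is a YES-instance.
   Context: A Node Multiway Cut instance $I=(G,T,k)$ consists of a simple undirected graph $G=(V,E)$, a set $T\subseteq V$ of terminals and an integer $k$; it is a YES-instance iff there is a set $X\subseteq V\setminus T$ with $|X|\le k$ such that every path in $G$ between two distinct terminals contains a vertex of $X$. Let $\mathcal P(I)$ be the set of all simple paths in $G$ connecting two distinct terminals. The LP-relaxation of $I$ is: minimize $\sum_{v\in V\setminus T} d_v$ subject to $\sum_{v\in V(P)\setminus T} d_v\ge 1$ for every $P\in\mathcal P(I)$ and $d_v\ge 0$ for all $v\in V\setminus T$. $LP(I)$ denotes its optimum value and $p(I)=k-LP(I)$. $G-w$ is $G$ with vertex $w$ and its incident edges removed. For a terminal $t$ and a non-terminal neighbour $w$, $G/tw$ is obtained by deleting $t$ and $w$ and adding a new vertex adjacent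 to all vertices formerly adjacent to $t$ or $w$; this new vertex is identified with $t$, so the terminal set remains $T$. *)

(* Defs.v *)
From HB Require Import structures.
From mathcomp Require Import all_boot all_order all_algebra.
Set Implicit Arguments. Unset Strict Implicit. Unset Printing Implicit Defensive.
Import Order.TTheory GRing.Theory Num.Theory.

(* A Node Multiway Cut instance on an ambient finite vertex type V:
   the graph G has vertex set [vset] and (simple) adjacency [edge]
   (only edges between vertices of [vset] matter), terminal set [terms]
   and budget [budget] (an integer, since k-1 may be formed). *)
Record instance (V : finType) := Inst {
  vset : {set V};
  edge : rel V;
  terms : {set V};
  budget : int }.

Definition wf_instance (V : finType) (I : instance V) : Prop :=
  [/\ symmetric (edge I), irreflexive (edge I) & terms I \subset vset I].

Definition term_path (V : finType) (I : instance V) (p : seq V) : bool :=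
  match p with
  | [::] => false
  | x :: q => [&& path (edge I) x q, uniq p, all (fun v => v \in vset I) p,
                 x \in terms I, last x q \in terms I & x != last x q]
  end.

Definition is_cut (V : finType) (I : instance V) (X : {set V}) : Prop :=
  X \subset vset I :\: terms I /\
  forall p, term_path I p -> has (fun v => v \in X) p.

Definition yes_instance (V : finType) (I : instance V) : Prop :=
  exists X : {set V}, is_cut I X /\ (Posz #|X| <= budget I)%R.

Local Open Scope ring_scope.

(* LP-relaxation: variables d_v for v in V \ T (d is a function on the
   ambient type; only its values on vset \ terms are relevant). *)
Definition lp_feasible (R : realFieldType) (V : finType) (I : instance V)
    (d : V -> R) : Prop :=
  (forall v, v \in vset I :\: terms I -> 0 <= d v) /\
  (forall p, term_path I p -> 1 <= \sum_(v <- p | v \notin terms I) d v).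

Definition lp_cost (R : realFieldType) (V : finType) (I : instance V)
    (d : V -> R) : R := \sum_(v in vset I :\: terms I) d v.

Definition lp_opt_st (R : realFieldType) (V : finType) (I : instance V)
    (extra : (V -> R) -> Prop) (x : R) : Prop :=
  (exists d, [/\ lp_feasible I d, extra d & lp_cost I d = x]) /\
  (forall d, lp_feasible I d -> extra d -> x <= lp_cost I d).

Definition lp_opt (R : realFieldType) (V : finType) (I : instance V) (x : R) :=
  lp_opt_st I (fun _ => True) x.

Definition pval (R : realFieldType) (V : finType) (I : instance V) (x : R) : R :=
  (budget I)%:~R - x.

Definition del_inst (V : finType) (I : instance V) (w : V) : instance V :=
  Inst (vset I :\ w) (edge I) (terms I) (budget I - 1).

(* G / tw: w is deleted and t (the merged vertex) becomes adjacent to all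
   vertices formerly adjacent to t or w; terminals and budget unchanged *)
Definition contr_inst (V : finType) (I : instance V) (t w : V) : instance V :=
  Inst (vset I :\ w)
       (fun x y => (x != y) && [|| edge I x y, (x == t) && edge I w y
                                 | (y == t) && edge I w x])
       (terms I) (budget I).

(* Main.v *)
Require Import Defs.
From HB Require Import structures.
From mathcomp Require Import all_boot all_order all_algebra zify ring lra.
Import Order.TTheory GRing.Theory Num.Theory.
Local Open Scope ring_scope.
Set Implicit Arguments. Unset Strict Implicit.

Section Gen.
Variable R : realFieldType.

Lemma sum_sub_uniq (T : eqType) (F : T -> R) (P : pred T) (q p : seq T) :
  uniq q -> {subset q <= p} -> (forall x, x \in p -> P x -> 0 <= F x) ->
  \sum_(x <- q | P x) F x <= \sum_(x <- p | P x) F x.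
Proof.
elim: p q => [|y p IH] q Uq Sq Hp.
  by case: q Uq Sq => // x q _ /(_ x (mem_head _ _)).
rewrite big_cons.
have Hp' : forall x, x \in p -> P x -> 0 <= F x.
  by move=> x xp; apply: Hp; rewrite inE xp orbT.
case: (boolP (y \in q)) => yq.
  rewrite (perm_big _ (perm_to_rem yq)) big_cons.
  have Ur : uniq (rem y q) by rewrite rem_uniq.
  have Sr : {subset rem y q <= p}.
    move=> z zr; have := Sq z (mem_rem zr); rewrite inE.
    case/orP=> // /eqP zy; move: zr; rewrite zy.
    by move: Uq; rewrite (perm_uniq (perm_to_rem yq)) /= => /andP[/negbTE->].
  case: (P y); last exact: IH.
  by rewrite lerD2l; apply: IH.
have Sr : {subset q <= p}.
  move=> z zq; have := Sq z zq; rewrite inE; case/orP=> // /eqP zy.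
  by move: yq; rewrite -zy zq.
case: ifP => Py; last exact: IH.
rewrite -[X in X <= _]add0r; apply: lerD; last exact: IH.
by apply: Hp => //; rewrite mem_head.
Qed.

Lemma sum_two (T : eqType) (F : T -> R) (P : pred T) (p : seq T) u u' :
  u != u' -> u \in p -> u' \in p -> P u -> P u' ->
  (forall x, x \in p -> P x -> 0 <= F x) ->
  F u + F u' <= \sum_(x <- p | P x) F x.
Proof.
move=> nu up u'p Pu Pu' H.
have := @sum_sub_uniq T F P [:: u; u'] p.
rewrite /= inE nu => /(_ isT); rewrite !big_cons big_nil Pu Pu' addr0; apply=> //.
by move=> z; rewrite !inE => /orP[]/eqP->.
Qed.

Lemma sum_one (T : eqType) (F : T -> R) (P : pred T) (p : seq T) u :
  u \in p -> P u -> (forall x, x \in p -> P x -> 0 <= F x) ->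
  F u <= \sum_(x <- p | P x) F x.
Proof.
move=> up Pu H.
have := @sum_sub_uniq T F P [:: u] p.
rewrite /= => /(_ isT); rewrite !big_cons big_nil Pu addr0; apply=> //.
by move=> z; rewrite !inE => /eqP->.
Qed.
End Gen.

Section Paths.
Variable V : finType.

Lemma walk_to_tp (J : instance V) x q :
  path (edge J) x q -> all (mem (vset J)) (x :: q) ->
  x \in terms J -> last x q \in terms J -> x != last x q ->
  exists p, term_path J p /\ {subset p <= x :: q}.
Proof.
move=> pq aq xt lt nxl.
move: lt nxl; case: (shortenP pq) => p' pp' up' sp' lt nxl.
exists (x :: p'); split.
  rewrite /term_path pp' up' xt lt nxl /= andbT.
  move: aq => /= /andP[-> /allP aq]; apply/allP => z /sp' /aq //.
by move=> z; rewrite !inE => /orP[->//|/sp' ->]; rewrite orbT.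
Qed.

Lemma path_refl_strict (e : rel V) x p :
  path (fun a b => (a == b) || e a b) x p -> uniq (x :: p) -> path e x p.
Proof.
elim: p x => [//|y p IH] x /= /andP[/orP[/eqP xy|exy] pp] /andP[nx up].
  by move: nx; rewrite xy inE eqxx.
by rewrite exy /=; apply: IH.
Qed.

Lemma walk_to_tp_refl (J : instance V) x q :
  path (fun a b => (a == b) || edge J a b) x q -> all (mem (vset J)) (x :: q) ->
  x \in terms J -> last x q \in terms J -> x != last x q ->
  exists p, term_path J p /\ {subset p <= x :: q}.
Proof.
move=> pq aq xt lt nxl.
move: lt nxl; case: (shortenP pq) => p' pp' up' sp' lt nxl.
exists (x :: p'); split.
  rewrite /term_path (path_refl_strict pp' up') up' xt lt nxl /= andbT.
  move: aq => /= /andP[-> /allP aq]; apply/allP => z /sp' /aq //.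
by move=> z; rewrite !inE => /orP[->//|/sp' ->]; rewrite orbT.
Qed.
End Paths.

Lemma sum_sub_filter (R : realFieldType) (T : eqType) (F : T -> R) (P : pred T) (q p : seq T) :
  uniq q -> (forall x, x \in q -> P x -> x \in p) ->
  (forall x, x \in p -> P x -> 0 <= F x) ->
  \sum_(x <- q | P x) F x <= \sum_(x <- p | P x) F x.
Proof.
move=> uq sq H.
have -> : \sum_(x <- q | P x) F x = \sum_(x <- [seq x <- q | P x] | P x) F x.
  by rewrite big_filter_cond; apply: eq_bigl => x; rewrite andbb.
apply: sum_sub_uniq => //; first exact: filter_uniq.
by move=> z; rewrite mem_filter => /andP[Pz zq]; apply: sq.
Qed.

Section Surgery.
Variables (V : finType) (I : instance V) (t w : V).
Hypotheses (wfI : wf_instance I) (tT : t \in terms I)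
  (wN : w \in vset I :\: terms I) (etw : edge I t w).

Let symI : symmetric (edge I). Proof. by case: wfI. Qed.
Let irrI : irreflexive (edge I). Proof. by case: wfI. Qed.
Let TV : terms I \subset vset I. Proof. by case: wfI. Qed.
Let wT : w \notin terms I. Proof. by move: wN; rewrite in_setD => /andP[]. Qed.
Let wV : w \in vset I. Proof. by move: wN; rewrite in_setD => /andP[]. Qed.
Let tw : t != w. Proof. by apply: contraNneq wT => <-. Qed.
Let tV : t \in vset I. Proof. exact: (subsetP TV). Qed.

Fixpoint expw x p := match p with
  | [::] => [::]
  | y :: p' => (if edge I x y then [:: y] else [:: w; y]) ++ expw y p'
  end.

Lemma expw_prop x p : path (edge (contr_inst I t w)) x p ->
  [/\ path (edge I) x (expw x p), last x (expw x p) = last x p &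
      {subset expw x p <= w :: p}].
Proof.
elim: p x => [|y p IH] x /=; first by [].
case/andP=> exy pp; have [IH1 IH2 IH3] := IH y pp.
split.
- case: ifP => exy'; first by rewrite /= exy'.
  move: exy; rewrite /= exy' /= => /andP[_ /orP[/andP[/eqP xt ewy]|/andP[/eqP yt ewx]]].
  + by subst x; rewrite /= etw ewy.
  + by subst y; rewrite /= symI ewx symI etw IH1.
- by case: ifP => _; rewrite last_cat.
- move=> z; case: ifP => _; rewrite mem_cat => /orP[|/IH3]; rewrite !inE.
  + by move=> ->; rewrite orbT.
  + by case/orP=> ->; rewrite ?orbT.
  + by case/orP=> ->; rewrite ?orbT.
  + by case/orP=> ->; rewrite ?orbT.
Qed.

Lemma lift_path p : term_path (contr_inst I t w) p ->
  exists q, term_path I q /\ {subset q <= w :: p}.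
Proof.
case: p => [//|x p]; rewrite /term_path => /and5P[pp up ap xT /andP[lT nxl]].
have [P1 P2 P3] := expw_prop pp.
have Hall : all (mem (vset I)) (x :: expw x p).
  apply/allP => z; rewrite inE => /orP[/eqP->|/P3].
    by move: ap => /= /andP[]; rewrite in_setD1 => /andP[].
  rewrite inE => /orP[/eqP->//|zp].
  by have := allP ap z; rewrite inE zp orbT in_setD1 => /(_ isT) /andP[].
have lT' : last x (expw x p) \in terms I by rewrite P2.
have nxl' : x != last x (expw x p) by rewrite P2.
have [q [tq sq]] := walk_to_tp P1 Hall xT lT' nxl'.
exists q; split=> // z /sq; rewrite !inE => /orP[->|/P3]; rewrite ?orbT //.
by rewrite !inE => /orP[->|->]; rewrite ?orbT.
Qed.

Definition fw v := if v == w then t else v.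

Lemma proj_path p : term_path I p ->
  exists q, term_path (contr_inst I t w) q /\ {subset q <= map fw p}.
Proof.
case: p => [//|x p]; rewrite /term_path => /and5P[pp up ap xT /andP[lT nxl]].
have xw : x != w by apply: contraNneq wT => <-.
have lw : last x p != w by apply: contraNneq wT => <-.
have fx : fw x = x by rewrite /fw (negbTE xw).
have fl : fw (last x p) = last x p by rewrite /fw (negbTE lw).
have Pm : path (fun a b => (a == b) || edge (contr_inst I t w) a b) (fw x) (map fw p).
  elim: p x pp {up ap xT lT nxl xw lw fx fl} => [//|y p IH] x /= /andP[exy pp].
  rewrite IH // andbT /fw.
  have [xw'|xw'] := eqVneq x w; have [yw'|yw'] := eqVneq y w.
  - by subst; rewrite irrI in exy.
  - subst x.
    have [ty|ty] := eqVneq t y; first by rewrite ty eqxx.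
    by rewrite /= eqxx exy !orbT.
  - subst y.
    have [xt|xt] := eqVneq x t; first by rewrite xt eqxx.
    by rewrite /= eqxx (symI w) exy !orbT.
  - idtac.
    have [xy|xy] := eqVneq x y; first by rewrite xy irrI in exy.
    by rewrite /= exy.
have Hall : all (mem (vset (contr_inst I t w))) (fw x :: map fw p).
  rewrite -map_cons; apply/allP => z /mapP[v vin ->]; rewrite /= /fw.
  case: ifP => [_|/negbT vw]; first by rewrite in_setD1 tw tV.
  by rewrite in_setD1 vw /= (allP ap v vin).
have xT' : fw x \in terms (contr_inst I t w) by rewrite fx.
have lT' : last (fw x) (map fw p) \in terms (contr_inst I t w) by rewrite last_map fl.
have nxl' : fw x != last (fw x) (map fw p) by rewrite last_map fl fx.
have [q [tq sq]] := walk_to_tp_refl Pm Hall xT' lT' nxl'.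
by exists q; split=> // z /sq.
Qed.


Lemma tp_del p : term_path (del_inst I w) p -> term_path I p.
Proof.
case: p => [//|x p]; rewrite /term_path => /and5P[h1 h2 ap h4 h5].
apply/and5P; split => //; apply/allP => z /(allP ap); rewrite in_setD1 => /andP[].
done.
Qed.

Lemma tp_to_del p : term_path I p -> w \notin p -> term_path (del_inst I w) p.
Proof.
case: p => [//|x p]; rewrite /term_path => /and5P[h1 h2 ap h4 h5] wp.
apply/and5P; split => //; apply/allP => z zp; rewrite in_setD1 (allP ap z zp) andbT.
by apply: contraNneq wp => <-.
Qed.

Lemma yes_equiv : yes_instance I <->
  yes_instance (del_inst I w) \/ yes_instance (contr_inst I t w).
Proof.
split.
- case=> X [[XS Xc] Xk].
  case: (boolP (w \in X)) => wX.
  + left; exists (X :\ w); split; last first.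
      move: Xk; rewrite (cardsD1 w X) wX /=.
      rewrite /del_inst /=; move: (#|X :\ w|) => n; lia.
    split.
      apply/subsetP => z; rewrite !inE => /andP[zw zX].
      by move/subsetP: XS => /(_ z zX); rewrite !inE zw => /andP[-> ->].
    move=> p tp; have := Xc p (tp_del tp); case/hasP => z zp zX.
    apply/hasP; exists z => //; rewrite in_setD1 zX andbT.
    move: tp; case: p zp => [//|x p] zp; rewrite /term_path => /and5P[_ _ ap _ _].
    by move: (allP ap z zp); rewrite /= in_setD1 => /andP[].
  + right; exists X; split=> //; split.
      apply/subsetP => z zX; move/subsetP: XS => /(_ z zX).
      rewrite !inE => /andP[-> ->]; rewrite andbT /=.
      by apply: contraNneq wX => <-.
    move=> p tp; have [q [tq sq]] := lift_path tp.
    have := Xc q tq; case/hasP => z zq zX; apply/hasP; exists z => //.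
    have := sq z zq; rewrite inE => /orP[/eqP zw|//].
    by move: wX; rewrite -zw zX.
- case=> [[X [[XS Xc] Xk]]|[X [[XS Xc] Xk]]].
  + exists (w |: X); split; last first.
      move: Xk; rewrite /del_inst /= cardsU1.
      case: (w \in X) => /=; move: (#|X|) => n; lia.
    split.
      apply/subsetP => z; rewrite in_setU1 => /orP[/eqP->//|zX].
      move/subsetP: XS => /(_ z zX); rewrite !inE.
      by case/and3P => -> _ ->.
    move=> p tp; case: (boolP (w \in p)) => wp.
      by apply/hasP; exists w => //; rewrite setU11.
    have := Xc p (tp_to_del tp wp); case/hasP => z zp zX.
    by apply/hasP; exists z => //; rewrite in_setU1 zX orbT.
  + exists X; split=> //; split.
      apply/subsetP => z zX; move/subsetP: XS => /(_ z zX).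
      by rewrite !inE => /and3P[-> _ ->].
    move=> p tp; have [q [tq sq]] := proj_path tp.
    have := Xc q tq; case/hasP => z zq zX; apply/hasP.
    have := sq z zq => /mapP[v vp zv]; exists v => //.
    move: zv; rewrite /fw; case: ifP => [_ zt|_ <- //].
    move/subsetP: XS => /(_ z zX); rewrite in_setD zt /= tT //.
Qed.

Lemma cost_split (R : realFieldType) (d : V -> R) :
  lp_cost I d = d w + lp_cost (contr_inst I t w) d.
Proof.
rewrite /lp_cost (bigD1 w) //=; congr (_ + _); apply: eq_bigl => v.
by rewrite !inE; case: (v == w); case: (v \in terms I); case: (v \in vset I).
Qed.

Lemma cost_split_del (R : realFieldType) (d : V -> R) :
  lp_cost I d = d w + lp_cost (del_inst I w) d.
Proof.
rewrite /lp_cost (bigD1 w) //=; congr (_ + _); apply: eq_bigl => v.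
by rewrite !inE; case: (v == w); case: (v \in terms I); case: (v \in vset I).
Qed.

Lemma tp_uniq p : term_path I p -> uniq p.
Proof. by case: p => [//|x p]; rewrite /term_path => /and5P[]. Qed.

Lemma tp_uniq2 p : term_path (contr_inst I t w) p -> uniq p.
Proof. by case: p => [//|x p]; rewrite /term_path => /and5P[]. Qed.

Lemma tp_vset2 p v : term_path (contr_inst I t w) p -> v \in p -> v \in vset I :\ w.
Proof.
case: p => [//|x p]; rewrite /term_path => /and5P[_ _ ap _ _] vp.
exact: (allP ap).
Qed.

Lemma tp_vset p v : term_path I p -> v \in p -> v \in vset I.
Proof.
case: p => [//|x p]; rewrite /term_path => /and5P[_ _ ap _ _] vp.
exact: (allP ap).
Qed.

Lemma lp_contr_restr (R : realFieldType) (x2 : R) :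
  lp_opt (contr_inst I t w) x2 -> lp_opt_st I (fun d : V -> R => d w = 0) x2.
Proof.
case=> [[d2 [[d2n d2p] _ c2]] lb].
split.
  exists (fun v => if v == w then 0 else d2 v); split.
  - split.
      move=> v; case: ifP => [_ _ //|/negbT vw]; rewrite !inE => /andP[vT vV].
      by apply: d2n; rewrite !inE vw vT vV.
    move=> p tp; have [q [tq sq]] := proj_path tp.
    apply: le_trans (d2p q tq) _.
    have -> : \sum_(v <- q | v \notin terms (contr_inst I t w)) d2 v =
              \sum_(v <- q | v \notin terms I) (if v == w then 0 else d2 v).
      rewrite big_seq_cond [RHS]big_seq_cond; apply: eq_bigr => v /andP[vq _].
      have := tp_vset2 tq vq; rewrite !inE => /andP[/negbTE -> _] //.
    apply: sum_sub_filter; first exact: tp_uniq2 tq.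
      move=> v vq vT; have := sq v vq; case/mapP => u up; rewrite /fw.
      case: ifP => [_ vt|_ -> //]; by move: vT; rewrite vt tT.
    move=> v vp vT; case: ifP => // /negbT vw; apply: d2n.
    by rewrite !inE vw vT (tp_vset tp vp).
  - by rewrite eqxx.
  - rewrite cost_split eqxx add0r -c2; apply: eq_bigr => v.
    by rewrite !inE => /and3P[_ /negbTE -> _].
move=> d [dn dp] dw0; rewrite cost_split dw0 add0r; apply: lb => //; split.
  by move=> v; rewrite !inE => /andP[vT /andP[_ vV]]; apply: dn; rewrite !inE vT vV.
move=> q tq; have [p [tp sp]] := lift_path tq.
apply: le_trans (dp p tp) _.
have := @sum_sub_uniq R V d (fun v => v \notin terms I) p (w :: q) (tp_uniq tp) sp.
rewrite big_cons wT dw0 add0r; apply.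
move=> v; rewrite inE => /orP[/eqP-> _|vq vT]; first by rewrite dw0.
by apply: dn; rewrite !inE vT; have := tp_vset2 tq vq; rewrite !inE => /andP[_ ->].
Qed.

End Surgery.

Section Generic.
Variable R : realFieldType.

Definition mn (a b : R) := if a <= b then a else b.

Lemma bigmin_spec (T : eqType) (L : seq T) (P : pred T) (f : T -> R) :
  let m := \big[mn/1]_(x <- L | P x) f x in
  [/\ m <= 1, forall x, x \in L -> P x -> m <= f x &
      m = 1 \/ exists x, [/\ x \in L, P x & m = f x]].
Proof.
elim: L => [|y L [IH1 IH2 IH3]] /=; first by rewrite big_nil; split=> //; left.
rewrite big_cons; case: ifP => Py.
- rewrite /mn; case: ifP => H.
  + split.
    * by apply: le_trans H IH1.
    * move=> x; rewrite inE => /orP[/eqP->//|xL] Px.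
      exact: le_trans H (IH2 x xL Px).
    * by right; exists y; rewrite mem_head Py.
  + split=> //.
    * move=> x; rewrite inE => /orP[/eqP->|xL] Px; last exact: IH2.
      by apply: ltW; rewrite ltNge H.
    * case: IH3 => [->|[x [xL Px ->]]]; first by left.
      by right; exists x; rewrite inE xL orbT.
- split=> //.
  + by move=> x; rewrite inE => /orP[/eqP->|xL] Px; [rewrite Py in Px|apply: IH2].
  + case: IH3 => [->|[x [xL Px ->]]]; first by left.
    by right; exists x; rewrite inE xL orbT.
Qed.

Lemma crossing (T : eqType) (e : rel T) (P : pred T) x q :
  path e x q -> P x -> ~~ P (last x q) ->
  exists a b, [/\ e a b, P a, ~~ P b, a \in x :: q & b \in q].
Proof.
elim: q x => [|y q IH] x /=; first by move=> _ ->.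
case/andP=> exy pq Px; case: (boolP (P y)) => Py.
  move=> /(IH y pq Py) [a [b [eab Pa Pb ain bin]]].
  exists a, b; split=> //; last by rewrite inE bin orbT.
  by rewrite inE ain orbT.
by move=> _; exists x, y; rewrite !mem_head.
Qed.

Lemma argmin_seq (T : eqType) (l : seq T) (f : T -> R) :
  l != [::] -> exists2 x, x \in l & forall y, y \in l -> f x <= f y.
Proof.
elim: l => [//|y l IH] _.
case: (eqVneq l [::]) => [->|ln].
  by exists y; rewrite ?mem_head // => z; rewrite inE => /eqP->.
have [x xl H] := IH ln.
case: (leP (f y) (f x)) => H'.
  exists y; first exact: mem_head.
  by move=> z; rewrite inE => /orP[/eqP->//|/H]; apply: le_trans.
exists x; first by rewrite inE xl orbT.
by move=> z; rewrite inE => /orP[/eqP->|/H//]; apply: ltW.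
Qed.

Fixpoint Ssum (x0 : R) (l : seq R) (f : R -> R) : R :=
  match l with [::] => 0 | y :: l' => (y - x0) * f y + Ssum y l' f end.

Lemma Ssum_ext x l f g : (forall y, y \in l -> f y = g y) -> Ssum x l f = Ssum x l g.
Proof.
elim: l x => [//|y l IH] x H /=; rewrite H ?mem_head // IH // => z zl.
by apply: H; rewrite inE zl orbT.
Qed.

Lemma Ssum_lin x l f g a b :
  Ssum x l (fun r => a * f r + b * g r) = a * Ssum x l f + b * Ssum x l g.
Proof. elim: l x => [|y l IH] x /=; [by rewrite !mulr0 addr0 | rewrite IH; ring]. Qed.

Lemma Ssum_big (T : finType) (A : {set T}) x l (F : T -> R -> R) :
  Ssum x l (fun r => \sum_(v in A) F v r) = \sum_(v in A) Ssum x l (F v).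
Proof.
elim: l x => [|y l IH] x /=; first by rewrite big1.
by rewrite IH mulr_sumr -big_split.
Qed.

Lemma Ssum_mono x l f g : path <=%R x l -> (forall y, y \in l -> f y <= g y) ->
  Ssum x l f <= Ssum x l g.
Proof.
elim: l x => [//|y l IH] x /= /andP[xy pl] H.
apply: lerD; last by apply: IH => // z zl; apply: H; rewrite inE zl orbT.
by apply: ler_wpM2l; [rewrite subr_ge0 | apply: H; rewrite mem_head].
Qed.

Lemma Ssum_zero x l f : (forall y, y \in l -> f y = 0) -> Ssum x l f = 0.
Proof.
move=> H; transitivity (Ssum x l (fun _ => 0)); first exact: Ssum_ext.
by elim: l {H} x => [//|y l IH] x /=; rewrite IH mulr0 addr0.
Qed.

Definition ind (b : bool) : R := if b then 1 else 0.

Lemma Ssum_ind x l q : path <=%R x l -> q \in x :: l ->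
  Ssum x l (fun r => ind (r <= q)) = q - x.
Proof.
elim: l x => [|y l IH] x /=.
  by move=> _; rewrite inE => /eqP->; rewrite subrr.
case/andP=> xy pl; rewrite inE => /orP[/eqP qx|ql].
  subst q; case: (boolP (x \in y :: l)) => xin.
    rewrite IH //; have yx : y <= x.
      move: xin; rewrite inE => /orP[/eqP->//|xl].
      have := pl; rewrite path_sortedE; last exact: le_trans.
      by case/andP=> /allP /(_ x xl).
    have exy : y = x by apply: le_anti; rewrite yx xy.
    by rewrite exy !subrr mul0r add0r.
  rewrite Ssum_zero.
    rewrite /ind; case: ifP => [yx|_]; last by rewrite mulr0 addr0 subrr.
    have eyx : y = x by apply: le_anti; rewrite yx xy.
    by move: xin; rewrite eyx mem_head.
  move=> z zl; rewrite /ind; case: ifP => // zx.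
  have yz : y <= z.
    have := pl; rewrite path_sortedE; last exact: le_trans.
    by case/andP=> /allP /(_ z zl).
  have ezx : z = x by apply: le_anti; rewrite zx (le_trans xy yz).
  by move: xin; rewrite -ezx inE zl orbT.
rewrite IH //; have yq : y <= q.
  move: ql; rewrite inE => /orP[/eqP->//|ql].
  have := pl; rewrite path_sortedE; last exact: le_trans.
  by case/andP=> /allP /(_ q ql).
by rewrite /ind yq mulr1; ring.
Qed.
End Generic.

Lemma half_pos {R : realFieldType} : (0 : R) < 2^-1. Proof. by rewrite invr_gt0 ltr0n. Qed.

Definition clip {R : realFieldType} (z : R) : R := if z <= 0 then 0 else if z <= 2^-1 then z else 2^-1.

Lemma bound_real {R : realFieldType} (D1 ee : R) : 0 <= ee -> ee <= D1 -> D1 <= 1 ->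
  (clip D1 - clip (D1 - ee)) +
  (2^-1 - clip (if D1 - ee <= 1 - D1 then 1 - D1 else D1 - ee)) <= ee.
Proof.
move=> *; rewrite /clip.
have h2 : (2^-1 : R) * 2 = 1 by field.
case: (lerP (D1 - ee) (1 - D1)) => ?;
case: (lerP D1 0) => ?; case: (lerP D1 2^-1) => ?; case: (lerP (D1 - ee) 0) => ?;
case: (lerP (D1 - ee) 2^-1) => ?; case: (lerP (1 - D1) 0) => ?;
case: (lerP (1 - D1) 2^-1) => ?; lra.
Qed.

Lemma clip_ge0 {R : realFieldType} (z : R) : 0 <= clip z.
Proof. rewrite /clip; case: ifP => // /negbT; rewrite -ltNge => z0; case: ifP => _ //; [exact: ltW|exact: ltW half_pos]. Qed.

Lemma clip_le_half {R : realFieldType} (z : R) : clip z <= 2^-1.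
Proof. rewrite /clip; case: ifP => _; first exact: ltW half_pos. by case: ifP. Qed.

Lemma clip_le {R : realFieldType} (z r : R) : 0 < r -> r <= 2^-1 -> (r <= clip z) = (r <= z).
Proof.
move=> r0 rh; rewrite /clip; case: (lerP z 0) => z0.
  by apply/idP/idP => H; [lra | lra].
case: (lerP z 2^-1) => zh //; apply/idP/idP => H; lra.
Qed.

Lemma clip_mono {R : realFieldType} (z1 z2 : R) : z1 <= z2 -> clip z1 <= clip z2.
Proof.
move=> z12; rewrite /clip.
have hp := half_pos.
case: (lerP z1 0) => ?; case: (lerP z1 2^-1) => ?; case: (lerP z2 0) => ?;
case: (lerP z2 2^-1) => ?; lra.
Qed.


Section Arith.
Variable R : realFieldType.
Local Notation ind := (@ind R).

Lemma ind01 b : ind b = 0 \/ ind b = 1.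
Proof. by rewrite /ind; case: b; auto. Qed.

Lemma ar_empty (b1 b2 b3 : bool) : (b2 -> b1) ->
  0 <= 2^-1 * (1 * ind b1 + -1 * ind b2) + 2^-1 * (1 * ind true + -1 * ind b3).
Proof.
rewrite /ind; have hp : (0:R) < 2^-1 := half_pos.
by case: b1; case: b2; case: b3 => //= H; first [by have := H isT | lra].
Qed.

Lemma ar_one (b3 : bool) :
  2^-1 <= 2^-1 * (1 * ind true + -1 * ind false) + 2^-1 * (1 * ind true + -1 * ind b3).
Proof.
rewrite /ind; have hp : (0:R) < 2^-1 := half_pos.
by case: b3; lra.
Qed.

Lemma ar_two :
  1 <= 2^-1 * (1 * ind true + -1 * ind false) + 2^-1 * (1 * ind true + -1 * ind false).
Proof. rewrite /ind; have hp : (2^-1:R) * 2 = 1 by field. lra. Qed.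

Lemma ar_bs1 (r d0 d1 ee : R) : 0 < r -> r <= 2^-1 -> d0 - ee < r -> d1 < r ->
  1 <= d0 + d1 - ee -> False.
Proof. move=> *; have hp : (2^-1:R) * 2 = 1 by field. lra. Qed.

Lemma ar_mu (a1 d1 d2 ee r : R) : a1 <= d2 - ee -> d2 - ee < r -> 1 <= d2 + d1 - ee ->
  (if a1 <= 1 - d1 then 1 - d1 else a1) < r.
Proof. move=> *; case: ifP => _; lra. Qed.

Lemma ar_final (x y z ee : R) : (x - y) + (2^-1 - z) <= ee ->
  2^-1 * (1 * x + -1 * y) + 2^-1 * (1 * 2^-1 + -1 * z) <= 2^-1 * ee.
Proof.
move=> H; rewrite !mul1r !mulN1r -mulrDr; apply: ler_wpM2l; first exact: ltW half_pos.
lra.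
Qed.
End Arith.

Section Round.
Variables (R : realFieldType) (V : finType) (J : instance V) (d : V -> R).
Hypotheses (symJ : symmetric (edge J)) (fd : lp_feasible J d).

Notation AA := (vset J :\: terms J).

Definition e v : R := if v \in AA then @mn R (d v) 1 else 0.

Lemma e_ge0 v : 0 <= e v.
Proof.
rewrite /e /mn; case: ifP => // vA; case: ifP => // _; exact: fd.1.
Qed.

Lemma e_le1 v : e v <= 1.
Proof. rewrite /e /mn; case: ifP => // vA; case: ifP => // /negbT; rewrite -ltNge => /ltW. Qed.

Lemma e_T v : v \in terms J -> e v = 0.
Proof. by move=> vT; rewrite /e inE vT. Qed.

Lemma e_le_d v : v \in AA -> e v <= d v.
Proof. by move=> vA; rewrite /e vA /mn; case: ifP => // /negbT; rewrite -ltNge => /ltW. Qed.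

Definition len (q : seq V) := \sum_(x <- q) e x.

Lemma len_nt q : \sum_(x <- q | x \notin terms J) e x = len q.
Proof.
rewrite /len big_mkcond /=; apply: eq_bigr => x _.
by case: ifP => // /negbFE /e_T ->.
Qed.

Lemma len_ge0 q : 0 <= len q.
Proof. by apply: sumr_ge0 => x _; apply: e_ge0. Qed.

Lemma len_sub q p : uniq q -> {subset q <= p} -> len q <= len p.
Proof. by move=> uq sq; apply: (@sum_sub_uniq R V e predT) => // x _ _; apply: e_ge0. Qed.

Lemma tp_all p v : term_path J p -> v \in p -> v \in vset J.
Proof. by case: p => [//|x p]; rewrite /term_path => /and5P[_ _ ap _ _] vp; apply: (allP ap). Qed.

Lemma e_feas p : term_path J p -> 1 <= len p.
Proof.
move=> tp.
case: (boolP (has (fun v => (v \in AA) && (1 <= d v)) p)).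
  case/hasP => v vp /andP[vA dv].
  have ev : e v = 1 by rewrite /e vA /mn; case: ifP => // H; apply: le_anti; rewrite H dv.
  rewrite -ev; apply: (@sum_one R V e predT) => // x _ _; exact: e_ge0.
move/hasPn => H.
apply: le_trans (fd.2 p tp) _; rewrite -len_nt le_eqVlt; apply/orP; left.
rewrite big_seq_cond [X in _ == X]big_seq_cond; apply/eqP/eq_bigr => v /andP[vp vT].
have vA : v \in AA by rewrite inE vT (tp_all tp vp).
have := H v vp; rewrite vA /= -ltNge => dv.
by rewrite /e vA /mn; case: ifP => // /negbT; rewrite -ltNge => /(lt_trans dv); rewrite ltxx.
Qed.

Fixpoint allseqs (n : nat) : seq (seq V) :=
  if n is n'.+1 then [::] :: [seq x :: q | x <- enum V, q <- allseqs n'] else [:: [::]].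

Lemma mem_allseqs n q : (size q <= n)%N -> q \in allseqs n.
Proof.
elim: n q => [|n IH] [|x q] //=; rewrite ?inE ?eqxx // => sq.
apply/orP; right; apply: (allpairs_f (fun x q => x :: q)).
  by rewrite mem_enum.
exact: IH.
Qed.

Definition wt (s v : V) (q : seq V) : bool :=
  if q is x :: q' then
    [&& x == s, path (edge J) x q', uniq q, all (mem (vset J)) q & last x q' == v]
  else false.

Definition D (s v : V) : R := \big[@mn R/1]_(q <- allseqs #|V| | wt s v q) len q.

Lemma D_le1 s v : D s v <= 1.
Proof. by case: (bigmin_spec (allseqs #|V|) (wt s v) len). Qed.

Lemma D_ge0 s v : 0 <= D s v.
Proof.
rewrite /D; case: (bigmin_spec (allseqs #|V|) (wt s v) len) => _ _ [->|[q [_ _ ->]]] //.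
exact: len_ge0.
Qed.

Lemma D_real s v : D s v < 1 ->
  exists q', [/\ path (edge J) s q', uniq (s :: q'), all (mem (vset J)) (s :: q'),
                last s q' = v & D s v = len (s :: q')].
Proof.
rewrite /D; case: (bigmin_spec (allseqs #|V|) (wt s v) len) => _ _ [->|[q [_ wq ->]]].
  by rewrite ltxx.
move=> _; case: q wq => [//|x q'] /and5P[/eqP xs pq uq aq /eqP lq].
by subst x; exists q'.
Qed.

Lemma D_walk s q : path (edge J) s q -> all (mem (vset J)) (s :: q) ->
  D s (last s q) <= len (s :: q).
Proof.
move=> pq aq; case: (shortenP pq) => p' pp' up' sp'.
have ap' : all (mem (vset J)) (s :: p').
  apply/allP => z; rewrite inE => /orP[/eqP->|/sp' zq].
    by apply: (allP aq); rewrite mem_head.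
  by apply: (allP aq); rewrite inE zq orbT.
have wq : wt s (last s p') (s :: p') by rewrite /wt eqxx pp' up' ap' eqxx.
rewrite /D; case: (bigmin_spec (allseqs #|V|) (wt s (last s p')) len) => _ H _.
apply: le_trans (H _ _ wq) _.
  apply: mem_allseqs; rewrite -(card_uniqP up'); exact: max_card.
apply: len_sub => // z; rewrite !inE => /orP[->//|/sp' ->]; by rewrite orbT.
Qed.

Lemma D_self s : s \in terms J -> s \in vset J -> D s s = 0.
Proof.
move=> sT sV; apply: le_anti; rewrite D_ge0 andbT.
have := @D_walk s [::] isT; rewrite /= sV => /(_ isT).
by rewrite /len big_cons big_nil e_T // addr0.
Qed.

Lemma D_edge s u v : u \in vset J -> v \in vset J -> edge J u v ->
  D s v <= D s u + e v.
Proof.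
move=> uV vV euv; case: (ltP (D s u) 1) => Hu; last first.
  apply: le_trans (D_le1 _ _) _; apply: le_trans Hu _.
  by rewrite lerDl e_ge0.
have [q' [pq uq aq lq ->]] := D_real Hu.
have pq2 : path (edge J) s (rcons q' v) by rewrite rcons_path pq lq euv.
have aq2 : all (mem (vset J)) (s :: rcons q' v).
  by rewrite -rcons_cons all_rcons aq andbT; exact: vV.
have := D_walk pq2 aq2; rewrite last_rcons => H; apply: le_trans H _.
by rewrite /len -rcons_cons -cats1 big_cat big_seq1.
Qed.

Lemma D_term s s' : s \in terms J -> s' \in terms J -> s != s' -> D s s' = 1.
Proof.
move=> sT s'T ss'; apply: le_anti; rewrite D_le1 /= leNgt; apply/negP => H.
have [q' [pq uq aq lq Hq]] := D_real H.
move: H; rewrite Hq ltNge e_feas //.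
by rewrite /term_path pq uq aq sT lq s'T ss'.
Qed.

Lemma D_ge_e s v : e v <= D s v.
Proof.
case: (ltP (D s v) 1) => H; last by apply: le_trans (e_le1 _) H.
have [q' [pq uq aq lq ->]] := D_real H.
apply: (@sum_one R V e predT) => //; first by rewrite -lq mem_last.
by move=> x _ _; apply: e_ge0.
Qed.

Lemma last_rev_belast (y : V) l : last (last y l) (rev (belast y l)) = y.
Proof. by case: l => [//|z l] /=; rewrite rev_cons last_rcons. Qed.

Lemma D_pair s s' v : s \in terms J -> s' \in terms J -> s != s' ->
  1 <= D s v + D s' v - e v.
Proof.
move=> sT s'T ss'.
case: (ltP (D s v) 1) => H1; last first.
  by have := D_ge_e s' v; lra.
case: (ltP (D s' v) 1) => H2; last first.
  by have := D_ge_e s v; lra.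
have [q1 [pq1 uq1 aq1 lq1 ->]] := D_real H1.
have [q2 [pq2 uq2 aq2 lq2 ->]] := D_real H2.
set w := q1 ++ rev (belast s' q2).
have pw : path (edge J) s w.
  rewrite cat_path pq1 /= lq1 -lq2 rev_path.
  by rewrite (eq_path (e' := edge J)) // => a b; rewrite symJ.
have lw : last s w = s' by rewrite last_cat lq1 -lq2 last_rev_belast.
have aw : all (mem (vset J)) (s :: w).
  rewrite /w -cat_cons all_cat aq1 all_rev.
  move: aq2; rewrite lastI all_rcons => /andP[_ ->] //.
have lenw : len (s :: w) = len (s :: q1) + len (s' :: q2) - e v.
  rewrite /len -cat_cons big_cat big_rev /=.
  rewrite (lastI s' q2) -cats1 big_cat big_seq1 lq2.
  by rewrite /= addrA addrK.
rewrite -lenw.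
have [p [tp sp]] : exists p, term_path J p /\ {subset p <= s :: w}.
  by apply: walk_to_tp => //; rewrite lw.
apply: le_trans (e_feas tp) _; apply: len_sub => //.
by case: p tp {sp} => [//|x p]; rewrite /term_path => /and5P[].
Qed.

Definition Sb (r : R) (v : V) : {set V} :=
  [set s in terms J | (D s v - e v < r) && (r <= D s v)].

Definition h (r : R) (v : V) : R :=
  if v \in AA then (if (1 < #|Sb r v|)%N then 1 else if (0 < #|Sb r v|)%N then 2^-1 else 0)
  else 0.

Lemma h_ge0 r v : 0 <= h r v.
Proof. by rewrite /h; repeat case: ifP => _; rewrite ?ler01 ?invr_ge0 ?ler0n. Qed.

Lemma h_vals r v : h r v = 0 \/ h r v = 2^-1 \/ h r v = 1.
Proof. by rewrite /h; repeat case: ifP => _; auto. Qed.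


Lemma h_feas r : 0 < r -> r <= 2^-1 -> lp_feasible J (h r).
Proof.
move=> r0 rh; split; first by move=> v _; apply: h_ge0.
have r1 : r < 1 by apply: le_lt_trans rh _; rewrite invf_lt1 ?ltr0n // ltr1n.
case=> [//|x q] tp.
have tp' := tp; move: tp'; rewrite /term_path => /and5P[pq uq aq xT /andP[lT nxl]].
have xV : x \in vset J by apply: (allP aq); rewrite mem_head.
set s' := last x q in lT nxl.
have P1x : D x x < r by rewrite D_self.
have P1l : ~~ (D x (last x q) < r) by rewrite -leNgt D_term // ltW.
have [a [b [eab Pa Pb ain bin]]] :=
  crossing (P := fun z => D x z < r) pq P1x P1l.
have aV : a \in vset J by apply: (allP aq).
have bV : b \in vset J by apply: (allP aq); rewrite inE bin orbT.
rewrite -leNgt in Pb.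
have Hb := D_edge x aV bV eab.
have bT : b \notin terms J.
  apply/negP => bT; move: Hb; rewrite e_T // addr0 => Hb.
  by have := lt_le_trans (le_lt_trans Hb Pa) Pb; rewrite ltxx.
have xSb : x \in Sb r b by rewrite inE xT /=; apply/andP; split => //; lra.
have s'V : s' \in vset J by apply: (allP aq); rewrite mem_last.
have P2x : r <= D s' x by rewrite D_term // ?(ltW r1) // eq_sym.
have P2l : ~~ (r <= D s' (last x q)) by rewrite -ltNge D_self.
have [a' [b' [eab' Pa' Pb' ain' bin']]] :=
  crossing (P := fun z => r <= D s' z) pq P2x P2l.
rewrite -ltNge in Pb'.
have a'V : a' \in vset J by apply: (allP aq).
have b'V : b' \in vset J by apply: (allP aq); rewrite inE bin' orbT.
have eba' : edge J b' a' by rewrite symJ.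
have Ha' := D_edge s' b'V a'V eba'.
have a'T : a' \notin terms J.
  apply/negP => a'T; move: Ha'; rewrite e_T // addr0 => Ha'.
  by have := le_lt_trans (le_trans Pa' Ha') Pb'; rewrite ltxx.
have s'Sb : s' \in Sb r a' by rewrite inE lT /=; apply/andP; split => //; lra.
have bA : b \in AA by rewrite inE bT bV.
have a'A : a' \in AA by rewrite inE a'T a'V.
have nn : forall z, z \in x :: q -> z \notin terms J -> 0 <= h r z by move=> z _ _; apply: h_ge0.
case: (eqVneq b a') => [ba'|ba'].
  subst a'.
  have c2 : (1 < #|Sb r b|)%N.
    have : [set x; s'] \subset Sb r b by apply/subsetP => z; rewrite !in_set2 => /orP[]/eqP-> //.
    by move/subset_leq_card; rewrite cards2 nxl.
  have hb : h r b = 1 by rewrite /h bA c2.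
  rewrite -hb; apply: sum_one => //; by rewrite inE bin orbT.
have hb : 2^-1 <= h r b.
  rewrite /h bA; case: ifP => _; first by rewrite invf_le1 ?ler1n ?ltr0n.
  by have -> : (0 < #|Sb r b|)%N by apply/card_gt0P; exists x.
have ha' : 2^-1 <= h r a'.
  rewrite /h a'A; case: ifP => _; first by rewrite invf_le1 ?ler1n ?ltr0n.
  by have -> : (0 < #|Sb r a'|)%N by apply/card_gt0P; exists s'.
have bin2 : b \in x :: q by rewrite inE bin orbT.
have := sum_two (F := h r) (P := fun z => z \notin terms J) ba' bin2 ain' bT a'T nn.
apply: le_trans; have : (2^-1 : R) + 2^-1 = 1 by field.
move=> <-; exact: lerD.
Qed.

Definition mu s v := if D s v - e v <= 1 - D s v then 1 - D s v else D s v - e v.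

Definition raw : seq R :=
  [seq clip (D s v - e v) | s <- enum V, v <- enum V] ++
  [seq clip (D s v) | s <- enum V, v <- enum V] ++
  [seq clip (mu s v) | s <- enum V, v <- enum V].

Definition L : seq R := sort <=%R (2^-1 :: [seq z <- raw | 0 < z]).

Lemma L_in r : r \in L -> 0 < r /\ r <= 2^-1.
Proof.
rewrite mem_sort inE => /orP[/eqP->|]; first by split; [exact: half_pos|].
rewrite mem_filter => /andP[r0 rr]; split=> //.
move: rr; rewrite !mem_cat => /or3P[] /allpairsP[[s v] [_ _ ->]]; exact: clip_le_half.
Qed.

Lemma L_path : path <=%R 0 L.
Proof.
rewrite path_sortedE; last exact: le_trans.
rewrite sort_sorted ?andbT; last exact: le_total.
by apply/allP => r /L_in [/ltW].
Qed.

Lemma clip_inL z : clip z \in 0 :: L.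
Proof.
rewrite inE; case: (eqVneq (clip z) 0) => //= cz.
Abort.

Lemma raw_inL z : z \in raw -> z \in 0 :: L.
Proof.
move=> zr; rewrite inE; case: (eqVneq z 0) => //= z0.
rewrite mem_sort inE mem_filter zr andbT; apply/orP; right.
rewrite lt_neqAle eq_sym z0 /=.
by move: zr; rewrite !mem_cat => /or3P[] /allpairsP[[s v] [_ _ ->]]; exact: clip_ge0.
Qed.

Lemma raw1 s v : clip (D s v - e v) \in raw.
Proof. by rewrite mem_cat (allpairs_f (fun s v => clip (D s v - e v))) ?mem_enum. Qed.
Lemma raw2 s v : clip (D s v) \in raw.
Proof. by rewrite !mem_cat (allpairs_f (fun s v => clip (D s v))) ?mem_enum ?orbT. Qed.
Lemma raw3 s v : clip (mu s v) \in raw.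
Proof. by rewrite !mem_cat (allpairs_f (fun s v => clip (mu s v))) ?mem_enum ?orbT. Qed.

Lemma half_inL : 2^-1 \in 0 :: L.
Proof. by rewrite inE mem_sort mem_head orbT. Qed.

Lemma Ssum_one : Ssum 0 L (fun r => (@ind R) (r <= 2^-1)) = 2^-1.
Proof. by rewrite Ssum_ind ?subr0 //; [exact: L_path | exact: half_inL]. Qed.

Lemma pointwise v : v \in AA -> Ssum 0 L (fun r => h r v) <= 2^-1 * e v.
Proof.
move=> vA.
case: (eqVneq (terms J) set0) => [T0|Tn].
  rewrite Ssum_zero; first by rewrite mulr_ge0 ?invr_ge0 ?ler0n ?e_ge0.
  move=> r _; rewrite /h vA.
  have -> : Sb r v = set0 by apply/setP => z; rewrite !inE T0 inE.
  by rewrite cards0.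
have [s1 s1T s1min] : exists2 s1, s1 \in enum (terms J) &
    forall s, s \in enum (terms J) -> D s1 v - e v <= D s v - e v.
  apply: argmin_seq; case: (set_0Vmem (terms J)) Tn => [->|[z zT]]; first by rewrite eqxx.
  by move=> _; apply/eqP => H; move: zT; rewrite -mem_enum H.
rewrite mem_enum in s1T.
pose F1 := fun r => 1 * (@ind R) (r <= clip (D s1 v)) + (-1) * (@ind R) (r <= clip (D s1 v - e v)).
pose F2 := fun r => 1 * (@ind R) (r <= 2^-1) + (-1) * (@ind R) (r <= clip (mu s1 v)).
apply: (@le_trans _ _ (Ssum 0 L (fun r => 2^-1 * F1 r + 2^-1 * F2 r))).
  apply: Ssum_mono; first exact: L_path.
  move=> r rL; have [r0 rh] := L_in rL.
  rewrite /F1 /F2 !(clip_le _ r0 rh) rh.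
  rewrite /h vA.
  case: (set_0Vmem (Sb r v)) => [S0|[s0 s0S]].
    rewrite S0 cards0 /=; apply: ar_empty => H.
    by apply: le_trans H _; rewrite gerDl oppr_le0 e_ge0.
  have := s0S; rewrite inE => /andP[s0T /andP[A0 B0]].
  have m10 : D s1 v - e v <= D s0 v - e v by apply: s1min; rewrite mem_enum.
  have Bs1 : r <= D s1 v.
    rewrite leNgt; apply/negP => Hlt.
    have s01 : s0 != s1 by apply/eqP => E; subst s0; have := le_lt_trans B0 Hlt; rewrite ltxx.
    exact: (ar_bs1 r0 rh A0 Hlt (D_pair v s0T s1T s01)).
  have As1 : ~~ (r <= D s1 v - e v) by rewrite -ltNge; apply: le_lt_trans m10 A0.
  rewrite Bs1 (negbTE As1).
  have cpos : (0 < #|Sb r v|)%N by apply/card_gt0P; exists s0.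
  rewrite cpos.
  case: ifP => c2; last exact: ar_one.
  have [s2 s2S s21] : exists2 s2, s2 \in Sb r v & s2 != s1.
    have : (0 < #|Sb r v :\ s1|)%N.
      move: c2; rewrite (cardsD1 s1 (Sb r v)); case: (s1 \in Sb r v) => /=; lia.
    by case/card_gt0P => z; rewrite in_setD1 => /andP[zs zS]; exists z.
  move: s2S; rewrite inE => /andP[s2T /andP[A2 B2]].
  have m12 : D s1 v - e v <= D s2 v - e v by apply: s1min; rewrite mem_enum.
  have cmr : ~~ (r <= mu s1 v).
    by rewrite -ltNge /mu; apply: ar_mu m12 A2 (D_pair v s2T s1T s21).
  rewrite (negbTE cmr); exact: ar_two.
rewrite !Ssum_lin Ssum_one.
rewrite !Ssum_ind //; try exact: L_path; rewrite ?raw_inL ?raw1 ?raw2 ?raw3 //.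
rewrite !subr0; apply: ar_final.
exact: (bound_real (e_ge0 v) (D_ge_e s1 v) (D_le1 s1 v)).
Qed.

Lemma Ssum_scale (x : R) l f (c : R) : Ssum x l (fun r => c * f r) = c * Ssum x l f.
Proof. elim: l x => [|y l IH] x /=; [by rewrite mulr0 | rewrite IH; ring]. Qed.

Lemma round_exists : exists h0 : V -> R,
  [/\ lp_feasible J h0, lp_cost J h0 <= lp_cost J d &
      forall v, h0 v = 0 \/ h0 v = 2^-1 \/ h0 v = 1].
Proof.
have Ln : L != [::] by apply/eqP => E; have := mem_sort <=%R (2^-1 :: [seq z <- raw | 0 < z]) (2^-1);
  rewrite -/L E mem_head.
have [rs rsL rsmin] := argmin_seq (fun r => lp_cost J (h r)) Ln.
have [r0 rh] := L_in rsL.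
exists (h rs); split; [exact: h_feas | | exact: h_vals].
have up : Ssum 0 L (fun r => lp_cost J (h r)) <= 2^-1 * lp_cost J d.
  rewrite /lp_cost Ssum_big mulr_sumr; apply: ler_sum => v vA.
  apply: le_trans (pointwise vA) _; apply: ler_wpM2l; first exact: ltW half_pos.
  exact: e_le_d.
have lo : lp_cost J (h rs) * 2^-1 <= Ssum 0 L (fun r => lp_cost J (h r)).
  rewrite -Ssum_one -Ssum_scale; apply: Ssum_mono; first exact: L_path.
  move=> r rL; have [_ rh'] := L_in rL; rewrite /ind rh' mulr1; exact: rsmin.
have := le_trans lo up; rewrite mulrC => H.
by rewrite -(ler_pM2l (half_pos (R := R))).
Qed.

End Round.

Lemma halfopt (R : realFieldType) (V : finType) (J : instance V) (x : R) :
  symmetric (edge J) -> lp_opt J x ->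
  exists h0 : V -> R, [/\ lp_feasible J h0, lp_cost J h0 = x &
      forall v, h0 v = 0 \/ h0 v = 2^-1 \/ h0 v = 1].
Proof.
move=> symJ [[d [fd _ cd]] lb].
have [h0 [f0 c0 v0]] := round_exists symJ fd.
exists h0; split => //; apply: le_anti; rewrite (le_trans c0) ?cd //=.
exact: lb.
Qed.

Lemma halfint (R : realFieldType) (V : finType) (J : instance V) (x : R) :
  symmetric (edge J) -> lp_opt J x -> exists n : nat, x = n%:R / 2.
Proof.
move=> symJ Hx; have [h0 [_ <- v0]] := halfopt symJ Hx.
pose k v : nat := if h0 v == 0 then 0 else if h0 v == 2^-1 then 1 else 2.
have hk : forall v, h0 v = (k v)%:R / 2.
  move=> v; rewrite /k; case: (v0 v) => [->|[->|->]].
  - by rewrite eqxx mul0r.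
  - have -> : (2^-1 : R) == 0 = false by apply/negbTE; rewrite invr_neq0 // pnatr_eq0.
    by rewrite eqxx div1r.
  - have -> : (1 : R) == 0 = false by rewrite oner_eq0.
    have -> : (1 : R) == 2^-1 = false.
      have hh : (2^-1 : R) * 2 = 1 by field.
      by apply/negbTE/negP => /eqP H; lra.
    by rewrite divff // pnatr_eq0.
exists (\sum_(v in vset J :\: terms J) k v).
rewrite /lp_cost natr_sum mulr_suml; apply: eq_bigr => v _; exact: hk.
Qed.

Lemma contr_sym (V : finType) (I : instance V) t w :
  symmetric (edge I) -> symmetric (edge (contr_inst I t w)).
Proof.
move=> symI a b /=; rewrite eq_sym symI; congr (_ && _).
by case: (edge I b a); case: (a == t); case: (b == t); case: (edge I w a); case: (edge I w b).
Qed.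

Lemma struct_false (R : realFieldType) (V : finType) (I : instance V) (t w : V) (x : R) d :
  wf_instance I -> t \in terms I -> w \in vset I :\: terms I -> edge I t w ->
  (forall v a b, v \in vset I :\: terms I -> a \in terms I -> b \in terms I ->
     a != b -> edge I v a -> edge I v b -> False) ->
  (forall (t' w' : V) (x y : R), t' \in terms I -> w' \in vset I :\: terms I ->
     edge I t' w' -> lp_opt I x -> lp_opt_st I (fun d => d w' = 0) y -> x < y) ->
  lp_opt I x -> lp_feasible I d -> lp_cost I d = x ->
  forall p, term_path I p -> w \in p ->
  (forall v, v \in p -> v \notin terms I -> v != w -> d v = 0) -> False.
Proof.
move=> wfI tT wN etw R2 R3 Hopt fd cd p tp wp Hd.
have [symI irrI TV] := wfI.
have wT : w \notin terms I by move: wN; rewrite inE => /andP[].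
have R3c : forall s u, s \in terms I -> u \in vset I :\: terms I -> edge I s u ->
    d u = 0 -> False.
  move=> s u sT uA esu du.
  have : x < x.
    apply: (R3 s u x x sT uA esu Hopt); split; first by exists d.
    by move=> d' fd' _; apply: Hopt.2.
  by rewrite ltxx.
have Hp : forall v, v \in p -> v \in vset I by move=> v; apply: tp_vset.
case: p tp wp Hd Hp => [//|s q] tp wp Hd Hp.
move: tp; rewrite /term_path => /and5P[pq uq _ sT /andP[lT nxl]].
have ws : w != s by apply: contraNneq wT => ->.
move: wp; rewrite inE (negbTE ws) /= => wq.
move: pq uq lT nxl Hd Hp; case/splitPr: wq => q1 q2 pq uq lT nxl Hd Hp.
move: pq; rewrite cat_path => /andP[pq1 /= /andP[ew pq2]].
move: uq; rewrite -cat_cons cat_uniq => /and3P[u1 hd u2].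
rewrite last_cat /= in lT.
have wn1 : w \notin s :: q1 by apply: contra hd => H; apply/hasP; exists w => //; exact: mem_head.
have wn2 : w \notin q2 by move: u2 => /= /andP[].
have inp1 : forall v, v \in s :: q1 -> v \in s :: q1 ++ w :: q2.
  by move=> v; rewrite -cat_cons mem_cat => ->.
have inp2 : forall v, v \in w :: q2 -> v \in s :: q1 ++ w :: q2.
  by move=> v; rewrite -cat_cons mem_cat => ->; rewrite orbT.
have symR2 : forall a, a \in terms I -> a != t -> edge I w a -> False.
  move=> a aT aNt ewa; apply: (R2 w a t wN aT tT aNt ewa); by rewrite symI.
case: (boolP (t \in s :: q1)) => tin; last first.
  case: (boolP (last s q1 \in terms I)) => laT.
    apply: (symR2 _ laT); first by apply: contraNneq tin => <-; exact: mem_last.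
    by rewrite symI.
  have [a [b [eab aT bT ain bin]]] := crossing (P := fun z => z \in terms I) pq1 sT laT.
  have bin' : b \in s :: q1 by rewrite inE bin orbT.
  have bw : b != w by apply: contraNneq wn1 => <-.
  apply: (R3c a b aT _ eab); last by apply: Hd => //; apply: inp1.
  by rewrite inE bT (Hp b (inp1 _ bin')).
have tn2 : t \notin q2.
  apply: contraNN hd => H; apply/hasP; exists t => //; by rewrite inE H orbT.
case: q2 pq2 lT hd u2 wn2 tn2 inp2 ew nxl Hd Hp inp1 => [|y q2'] pq2 lT hd u2 wn2 tn2 inp2 ew nxl Hd Hp inp1.
  by rewrite lT in wT.
move: pq2 => /= /andP[ewy pq2].
case: (boolP (y \in terms I)) => yT.
  apply: (symR2 y yT _ ewy); apply: contraNneq tn2 => ->; exact: mem_head.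
have lT' : ~~ (last y q2' \notin terms I) by rewrite negbK.
have [a [b [eab aT bT ain bin]]] := crossing (P := fun z => z \notin terms I) pq2 yT lT'.
have aw : a != w by apply: contraNneq wn2 => <-.
have ain' : a \in w :: y :: q2' by rewrite inE ain orbT.
apply: (R3c b a _ _ _); [by rewrite negbK in bT | | by rewrite symI | ].
  by rewrite inE aT (Hp a (inp2 _ ain')).
by apply: Hd => //; apply: inp2.
Qed.

Unset Implicit Arguments.

Theorem mainTheorem4 (R : realFieldType) (V : finType) (I : instance V) (t w : V) :
  wf_instance I ->
  (* (R1) *)
  (forall a b, a \in terms I -> b \in terms I -> ~~ edge I a b) ->
  (forall x : R, lp_opt I x -> 0 <= pval I x) ->
  (* (R2) *)
  (forall v a b, v \in vset I :\: terms I -> a \in terms I -> b \in terms I ->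
     a != b -> edge I v a -> edge I v b -> False) ->
  (* (R3) *)
  (forall (t' w' : V) (x y : R), t' \in terms I -> w' \in vset I :\: terms I ->
     edge I t' w' -> lp_opt I x -> lp_opt_st I (fun d => d w' = 0) y -> x < y) ->
  t \in terms I -> w \in vset I :\: terms I -> edge I t w ->
  (forall x x1 : R, lp_opt I x -> lp_opt (del_inst I w) x1 ->
     x - 2^-1 <= x1 /\ pval (del_inst I w) x1 <= pval I x - 2^-1) /\
  (forall x x2 : R, lp_opt I x -> lp_opt (contr_inst I t w) x2 ->
     x + 2^-1 <= x2 /\ pval (contr_inst I t w) x2 <= pval I x - 2^-1) /\
  (yes_instance I <-> yes_instance (del_inst I w) \/ yes_instance (contr_inst I t w)).
Proof.
move=> wfI R1 Rp R2 R3 tT wN etw.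
have [symI irrI TV] := wfI.
have sym2 := contr_sym t w symI.
have sym1 : symmetric (edge (del_inst I w)) := symI.
have hh : (2^-1 : R) * 2 = 1 by field.
have wT : w \notin terms I by move: wN; rewrite inE => /andP[].
split; [|split]; last exact: yes_equiv.
- move=> x x1 Hx Hx1.
  suff H : x - 2^-1 <= x1.
    by split=> //; rewrite /pval /= intrB; lra.
  rewrite leNgt; apply/negP => Hlt.
  have [n En] := halfint symI Hx; have [m Em] := halfint sym1 Hx1.
  have E1 : 2 * x = n%:R by rewrite En; field.
  have E2 : 2 * x1 = m%:R by rewrite Em; field.
  have lt1 : (m.+1)%:R < n%:R :> R by rewrite -addn1 natrD; lra.
  rewrite ltr_nat in lt1.
  have le2 : (m.+2)%:R <= n%:R :> R by rewrite ler_nat.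
  have Hle : x1 + 1 <= x by move: le2; rewrite -addn2 natrD; lra.
  have [h1 [f1 c1 v1]] := halfopt sym1 Hx1.
  have h1n : forall v, 0 <= h1 v.
    by move=> v; case: (v1 v) => [->|[->|->]] //; rewrite invr_ge0 ler0n.
  pose d1 := fun v => if v == w then 1 else h1 v.
  pose h2 := fun v => if v == w then 2^-1 else h1 v.
  have costd : forall (g : V -> R), (forall v, v != w -> g v = h1 v) ->
      lp_cost I g = g w + x1.
    move=> g Hg; rewrite (cost_split_del wN) -c1; congr (_ + _).
    apply: eq_bigr => v; rewrite !inE => /andP[_ /andP[vw _]]; exact: Hg.
  have pathsum : forall (g : V -> R) p, (forall v, v != w -> g v = h1 v) ->
      term_path I p -> w \notin p -> 1 <= \sum_(v <- p | v \notin terms I) g v.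
    move=> g p Hg tp wp; apply: le_trans (f1.2 p (tp_to_del tp wp)) _.
    rewrite le_eqVlt; apply/orP; left; apply/eqP.
    rewrite big_seq_cond [RHS]big_seq_cond; apply: eq_bigr => v /andP[vp _].
    by rewrite Hg //; apply: contraNneq wp => <-.
  have fd1 : lp_feasible I d1.
    split.
      by move=> v _; rewrite /d1; case: ifP => // _; rewrite ler01.
    move=> p tp; case: (boolP (w \in p)) => wp; last first.
      by apply: pathsum => // v /negbTE vw; rewrite /d1 vw.
    have := @sum_one R V d1 (fun v => v \notin terms I) p w wp wT.
    rewrite /d1 eqxx; apply=> v _ _; case: ifP => // _; rewrite ler01.
  have cd1 : lp_cost I d1 = x.
    apply: le_anti; rewrite (Hx.2 d1 fd1 Logic.I) andbT.
    rewrite (costd d1); first by rewrite /d1 eqxx; lra.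
    by move=> v /negbTE vw; rewrite /d1 vw.
  have fh2 : lp_feasible I h2.
    split.
      by move=> v _; rewrite /h2; case: ifP => // _; rewrite invr_ge0 ler0n.
    move=> p tp; case: (boolP (w \in p)) => wp; last first.
      by apply: pathsum => // v /negbTE vw; rewrite /h2 vw.
    case: (boolP (has (fun v => [&& v \notin terms I, v != w & h1 v != 0]) p)).
      case/hasP => v vp /and3P[vT vw hv].
      have := @sum_two R V h2 (fun v => v \notin terms I) p w v.
      rewrite eq_sym vw => /(_ isT wp vp wT vT) H.
      have nn : forall z, z \in p -> z \notin terms I -> 0 <= h2 z.
        by move=> z _ _; rewrite /h2; case: ifP => _; [rewrite invr_ge0 ler0n|].
      apply: le_trans (H nn).
      rewrite /h2 eqxx (negbTE vw).
      case: (v1 v) => [h0|[->|->]]; first by rewrite h0 eqxx in hv.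
        lra.
      have hp : (0 : R) < 2^-1 := half_pos; lra.
    move/hasPn => Hn; exfalso.
    apply: (struct_false wfI tT wN etw R2 R3 Hx fd1 cd1 tp wp).
    move=> v vp vT vw; have := Hn v vp; rewrite vT vw /= negbK => /eqP hv.
    by rewrite /d1 (negbTE vw).
  have := Hx.2 h2 fh2 Logic.I; rewrite (costd h2); last by move=> v /negbTE vw; rewrite /h2 vw.
  rewrite /h2 eqxx; lra.
- move=> x x2 Hx Hx2.
  have Hr := lp_contr_restr wfI tT wN etw Hx2.
  have lt := R3 t w x x2 tT wN etw Hx Hr.
  suff H : x + 2^-1 <= x2 by split=> //; rewrite /pval /=; lra.
  have [n En] := halfint symI Hx; have [m Em] := halfint sym2 Hx2.
  have E1 : 2 * x = n%:R by rewrite En; field.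
  have E2 : 2 * x2 = m%:R by rewrite Em; field.
  have lt1 : n%:R < m%:R :> R by lra.
  rewrite ltr_nat in lt1.
  have le2 : (n.+1)%:R <= m%:R :> R by rewrite ler_nat.
  by move: le2; rewrite -addn1 natrD; lra.
Qed.
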